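(* Let $\mathcal R$ be a ring of subsets of a set $X$ (closed under finite intersections and finite unions) with $\mathcal R\subseteq\mathcal R_{seq}$. Then for every sequence $\{U_n:n\in\omega\}\subseteq\mathcal R$, the union $\bigcup_{n\in\omega}U_n$ belongs to $\mathcal R_{seq}$.
   Context: $\mathcal R_{seq}$ is the family of all sets $W$ for which there exist sequences $\{U_n\}_{n\in\omega}\subseteq\mathcal R$ and $\{V_n\}_{n\in\omega}\subseteq\mathcal R$ with $U_k\subseteq X\setminus V_k\subseteq U_{k+1}$ for every $k\in\omega$ and $\bigcup_nU_n=W$. *)

(* Defs.v *)
From mathcomp Require Import all_boot.
From mathcomp Require Import boolp classical_sets.
Set Implicit Arguments.
Unset Strict Implicit.
Unset Printing Implicit Defensive.
Local Open Scope classical_set_scope.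

(* A ring of subsets of X (here X is the whole type T): a family closed under
   (binary, hence all nonempty finite) intersections and unions. *)
Definition ring_of_sets (T : Type) (R : set (set T)) : Prop :=
  (forall A B, R A -> R B -> R (A `&` B)) /\
  (forall A B, R A -> R B -> R (A `|` B)).

Definition Rseq (T : Type) (R : set (set T)) : set (set T) :=
  [set W | exists (U V : nat -> set T),
     (forall n, R (U n)) /\ (forall n, R (V n)) /\
     (forall k, U k `<=` ~` V k /\ ~` V k `<=` U k.+1) /\
     \bigcup_n U n = W].

(* Main.v *)
Require Import Defs.
From mathcomp Require Import all_boot.
From mathcomp Require Import boolp classical_sets.
Local Open Scope classical_set_scope.

Section Aux.
Variable T : Type.
Variables (Uf Vf : nat -> nat -> set T).

Fixpoint Wp (k m : nat) : set T :=
  match m with 0 => Uf 0 k | m'.+1 => Wp k m' `|` Uf m'.+1 k end.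
Fixpoint Zp (k m : nat) : set T :=
  match m with 0 => Vf 0 k | m'.+1 => Zp k m' `&` Vf m'.+1 k end.

Lemma WpP k m x : Wp k m x <-> exists2 n, (n <= m)%N & Uf n k x.
Proof.
elim: m => [|m IH] /=.
  split; [by exists 0|by case=> n; rewrite leqn0 => /eqP ->].
split.
  case=> [/IH [n Hn Hx]|Hx]; [by exists n => //; apply: leqW|by exists m.+1].
case=> n; rewrite leq_eqVlt => /orP [/eqP ->|Hn Hx]; first by right.
by left; apply/IH; exists n.
Qed.

Lemma ZpP k m x : Zp k m x <-> forall n, (n <= m)%N -> Vf n k x.
Proof.
elim: m => [|m IH] /=.
  split; [by move=> H n; rewrite leqn0 => /eqP ->|by apply].
split.
  case=> /IH H1 H2 n; rewrite leq_eqVlt => /orP [/eqP ->//|Hn]; exact: H1.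
by move=> H; split; [apply/IH => n Hn; apply: H; apply: leqW|apply: H].
Qed.
End Aux.

Theorem lemma2 (T : Type) (R : set (set T)) :
  ring_of_sets R -> R `<=` Rseq R ->
  forall U : nat -> set T, (forall n, R (U n)) ->
  Rseq R (\bigcup_n U n).
Proof.
move=> [RI RU] HR U HU.
have : forall n, exists UV : (nat -> set T) * (nat -> set T),
    (forall k, R (UV.1 k)) /\ (forall k, R (UV.2 k)) /\
     (forall k, UV.1 k `<=` ~` UV.2 k /\ ~` UV.2 k `<=` UV.1 k.+1) /\
     \bigcup_k UV.1 k = U n.
  move=> n; have [U' [V' H]] := HR _ (HU n); by exists (U', V').
case/choice => f Hf.
pose Uf n := (f n).1; pose Vf n := (f n).2.
have mono : forall n k j, (k <= j)%N -> Uf n k `<=` Uf n j.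
  move=> n k j /subnK <-; elim: (j - k) => [|d IH] //= x /IH Hx.
  have [_ [_ [H _]]] := Hf n; rewrite addSn; apply: (H _).2; exact: (H _).1.
exists (fun k => @Wp T Uf k k), (fun k => @Zp T Vf k k); split; [|split; [|split]].
- move=> k; move: {2}k; elim=> [|m IH] /=; first by case: (Hf 0) => h _; exact: h.
  by apply: RU => //; case: (Hf m.+1) => h _; exact: h.
- move=> k; move: {2}k; elim=> [|m IH] /=; first by case: (Hf 0) => _ [h _]; exact: h.
  by apply: RI => //; case: (Hf m.+1) => _ [h _]; exact: h.
- move=> k; split => x.
    move=> /WpP [n Hn Hx] /ZpP H; have [_ [_ [H2 _]]] := Hf n.
    exact: ((H2 k).1 x Hx (H n Hn)).
  move=> Hx; apply/WpP.
  have [n Hn Hv] : exists2 n, (n <= k)%N & ~ Vf n k x.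
    case: (pselect (exists2 n, (n <= k)%N & ~ Vf n k x)) => // H'.
    exfalso; apply: Hx; apply/ZpP => n Hn.
    by case: (pselect (Vf n k x)) => // h; exfalso; apply: H'; exists n.
  exists n; first exact: leqW.
  have [_ [_ [H2 _]]] := Hf n; exact: ((H2 k).2 x Hv).
- rewrite eqEsubset; split => x.
    case=> k _ /WpP [n Hn Hx]; exists n => //.
    have [_ [_ [_ <-]]] := Hf n; by exists k.
  case=> n _; have [_ [_ [_ <-]]] := Hf n; case=> k _ Hx.
  exists (maxn n k) => //; apply/WpP; exists n; first exact: leq_maxl.
  exact: (mono n k _ (leq_maxr n k)).
Qed.
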